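(* Let $k\ge 0$ and $n,m>0$ be integers and let $P\in T_{n,k,m}$. Then $$\mathrm{word}(\phi'_{n,k,m}(P))=\mathrm{flip}\circ\mathrm{rev}\circ\mathrm{sw}^-_{1,-m}\circ\mathrm{rev}\circ\mathrm{flip}(\mathrm{word}(P)).$$
   Context: Words over $\{\mathrm{N},\mathrm{E}\}$ are identified with lattice paths from $(0,0)$ (N = unit north step, E = unit east step); $\mathrm{word}(P)$ is the word of a path $P$. $\mathrm{rev}(w_1\cdots w_n)=w_n\cdots w_1$, and $\mathrm{flip}$ interchanges the letters $\mathrm{N}$ and $\mathrm{E}$. For integers $r,s$, the levels of a word $w=w_1\cdots w_n$ are $l_0=0$, $l_i=l_{i-1}+r$ if $w_i=\mathrm{N}$, $l_i=l_{i-1}+s$ if $w_i=\mathrm{E}$ (so $l_i=ry+sx$ where $(x,y)$ is the endpoint of step $i$). The sweep map $\mathrm{sw}^-_{r,s}(w)$ is obtained by: for $k=-1,-2,-3,\ldots$ and then $k=\ldots,3,2,1,0$ (all negative values in decreasing order, then all nonnegative values in decreasing order), scan $w$ from right to left and append each letter $w_i$ ($i\ge1$) with $l_i=k$. $T_{n,k,m}$ is the set of lattice paths from $(0,0)$ to $(k+mn,n)$ with unit north and east steps that never go strictly to the right of the line $x=k+my$. For $P\in T_{n,k,m}$ its area vector is $g(P)=(g_0,\ldots,g_{n-1})$, where $g_i$ is the number of complete unit lattice squares in the strip $\{(x,y):x\ge0,\ i\le y\le i+1\}$ lying to the right of $P$ and to the left of the line $x=k+my$. For each integer $i\ge 0$,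 let $z^{(i)}$ be the subsequence of $g(P)$ consisting of the entries lying in $\{i,i-1,\ldots,i-m\}$, let $M$ be the largest $i$ with $z^{(i)}$ nonempty, and let $\sigma^{(i)}\in\{\mathrm{N},\mathrm{E}\}^*$ be obtained from $z^{(i)}$ by replacing each entry equal to $i$ by $\mathrm{N}$ and every other entry by $\mathrm{E}$. For $k<i\le M$, $\sigma^{(i)}$ begins with $\mathrm{E}$; write $\sigma^{(i)}=\mathrm{E}\tilde\sigma^{(i)}$. Set $\tau^{(i)}=\mathrm{rev}(\sigma^{(i)})$ for $0\le i\le k$, $\tau^{(i)}=\mathrm{E}\,\mathrm{rev}(\tilde\sigma^{(i)})$ for $k<i\le M$, and $\tau^{(i)}$ empty for $i>M$. Define $$\tau=\tau^{(0)}\,\mathrm{E}\tau^{(1)}\,\mathrm{E}\tau^{(2)}\cdots\mathrm{E}\tau^{(k)}\,\tau^{(k+1)}\cdots\tau^{(M)}$$ (exactly $k$ inserted letters $\mathrm{E}$, preceding $\tau^{(1)},\ldots,\tau^{(k)}$), and let $\phi'_{n,k,m}(P)$ be the lattice path with word $\tau$. *)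

(* Defs.v *)
From mathcomp Require Import all_boot all_order all_algebra.
Set Implicit Arguments. Unset Strict Implicit. Unset Printing Implicit Defensive.
Import GRing.Theory Num.Theory.

(* Letters N (north step) and E (east step); paths from (0,0) are identified
   with their words. *)
Inductive step := N | E.

Definition isN (c : step) : bool := if c is N then true else false.
Definition isE (c : step) : bool := if c is E then true else false.

Definition flip (w : seq step) : seq step :=
  map (fun c => if c is N then E else N) w.

Fixpoint levels (r s l : int) (w : seq step) : seq int :=
  match w with
  | [::] => [::]
  | c :: w' => let l' := (l + (if c is N then r else s))%R in l' :: levels r s l' w'
  end.

Definition sweep_level (r s : int) (w : seq step) (lv : int) : seq step :=
  rev [seq p.1 | p <- zip w (levels r s 0 w) & p.2 == lv].

(* B bounds |l_i| for all i; levels outside [-B, B] contribute nothing. *)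
Definition sweep_bound (r s : int) (w : seq step) : nat :=
  (size w * (absz r + absz s))%N.

Definition sweep_order (B : nat) : seq int :=
  [seq (- (Posz j.+1))%R | j <- iota 0 B] ++ [seq Posz (B - j) | j <- iota 0 B.+1].

Definition sweep_minus (r s : int) (w : seq step) : seq step :=
  flatten [seq sweep_level r s w lv | lv <- sweep_order (sweep_bound r s w)].

Fixpoint points (x y : nat) (w : seq step) : seq (nat * nat) :=
  match w with
  | [::] => [:: (x, y)]
  | N :: w' => (x, y) :: points x y.+1 w'
  | E :: w' => (x, y) :: points x.+1 y w'
  end.

Definition inT (n k m : nat) (w : seq step) : Prop :=
  count isN w = n /\ count isE w = (k + m * n)%N /\
  all (fun p : nat * nat => (p.1 <= k + m * p.2)%N) (points 0 0 w).

Fixpoint north_xs (x : nat) (w : seq step) : seq nat :=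
  match w with
  | [::] => [::]
  | N :: w' => x :: north_xs x w'
  | E :: w' => north_xs x.+1 w'
  end.

(* g_i = number of unit squares [a,a+1]x[i,i+1] (a >= 0) right of P (whose
   step in this strip is the vertical segment at x = xi) and left of the line
   x = k + m y (i.e. a+1 <= k + m i). *)
Definition area_vector (n k m : nat) (w : seq step) : seq nat :=
  mkseq (fun i => let xi := nth 0 (north_xs 0 w) i in
          count (fun a => (xi <= a) && (a.+1 <= k + m * i)) (iota 0 (k + m * n).+1)) n.

Definition zseq (m : nat) (g : seq nat) (i : nat) : seq nat :=
  [seq v <- g | (v <= i <= v + m)%N].

Definition sigma (m : nat) (g : seq nat) (i : nat) : seq step :=
  [seq (if v == i then N else E) | v <- zseq m g i].

(* M = largest i with z^{(i)} nonempty (every such i is <= max g + m) *)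
Definition Mmax (m : nat) (g : seq nat) : nat :=
  \max_(i < (foldr maxn 0 g + m).+1 | (0 < size (zseq m g i))%N) i.

Definition tau (k m : nat) (g : seq nat) (i : nat) : seq step :=
  if (i <= k)%N then rev (sigma m g i)
  else if (i <= Mmax m g)%N then E :: rev (behead (sigma m g i))
  else [::].

Definition phi' (n k m : nat) (w : seq step) : seq step :=
  let g := area_vector n k m w in
  tau k m g 0
  ++ flatten [seq E :: tau k m g i | i <- iota 1 k]
  ++ flatten [seq tau k m g i | i <- iota k.+1 (Mmax m g - k)].

(* Main.v *)
Require Import Defs.
From mathcomp Require Import all_boot all_order all_algebra.
From mathcomp Require Import zify ring lra.
Import GRing.Theory Num.Theory Order.TTheory.
From HB Require Import structures.

Definition step_eqb (a b : step) := match a, b with N, N | E, E => true | _, _ => false end.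
Lemma step_eqP : Equality.axiom step_eqb.
Proof. by case; case; constructor. Qed.
HB.instance Definition _ := hasDecEq.Build step step_eqP.

Definition delta (m : nat) (c : step) : int := if c is N then Posz m else (-1)%R.
Fixpoint sl m (s : int) w : seq int :=
  match w with [::] => [::] | c :: w' => s :: sl m (s + delta m c)%R w' end.
Fixpoint fin m (s : int) w : int :=
  match w with [::] => s | c :: w' => fin m (s + delta m c)%R w' end.
Fixpoint act m (s : int) w (L : int) : seq step :=
  match w with [::] => [::]
  | c :: w' => (if s == L then [:: c] else [::]) ++ act m (s + delta m c)%R w' L end.
Fixpoint nl m (s : int) w : seq int :=
  match w with [::] => [::]
  | N :: w' => s :: nl m (s + delta m N)%R w'
  | E :: w' => nl m (s + delta m E)%R w' end.
Definition sigI m (L : int) (gl : seq int) : seq step :=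
  [seq (if v == L then N else E) | v <- gl & ((v <= L) && (L <= v + Posz m))%R].

Lemma sigI_cons m L v gl : sigI m L (v :: gl) =
  (if ((v <= L) && (L <= v + Posz m))%R then [:: if v == L then N else E] else [::])
  ++ sigI m L gl.
Proof. by rewrite /sigI /=; case: ifP. Qed.
Lemma key m s w L :
  (if (L <= s)%R then [::] else [:: E]) ++ act m s w L ++
  (if (L <= fin m s w)%R then [:: E] else [::]) = sigI m L (nl m s w) ++ [:: E].
Proof.
elim: w s => [|c w IH] s /=.
  by case: ifP.
case: c => /=; rewrite ?sigI_cons -?catA -IH /=.
- by have [hs|hs|hs] := ltgtP s L; case: (lerP L (s + m)) => h //=; lia.
- by have [hs|hs|hs] := ltgtP s L; case: (lerP L (s - 1)) => h //=; lia.
Qed.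

Lemma fin_eq m s w : fin m s w = (s + Posz (m * count isN w) - Posz (count isE w))%R.
Proof.
elim: w s => [|c w IH] s /=; first by lia.
rewrite IH; case: c => /=; lia.
Qed.

Lemma size_sl m s w : size (sl m s w) = size w.
Proof. by elim: w s => //= c w IH s; rewrite IH. Qed.

Lemma sl_rcons m s w c : sl m s (rcons w c) = rcons (sl m s w) (fin m s w).
Proof. by elim: w s => //= c' w IH s; rewrite IH. Qed.

Lemma fin_rcons m s w c : fin m s (rcons w c) = (fin m s w + delta m c)%R.
Proof. by elim: w s => //= c' w IH s; rewrite IH. Qed.

Lemma levels_rev m s w :
  levels 1 (- Posz m)%R (fin m s w) (rev (flip w)) = rev (sl m s w).
Proof.
elim/last_ind: w => [|w c IH] //=.
rewrite /flip map_rcons rev_rcons sl_rcons rev_rcons fin_rcons /=.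
congr (_ :: _).
  by case: c => /=; lia.
rewrite -IH; congr levels; case: c => /=; lia.
Qed.

Lemma filter_flip m s w L :
  [seq p.1 | p <- zip (flip w) (sl m s w) & p.2 == L] = flip (act m s w L).
Proof.
elim: w s => //= c w IH s.
by case: eqP => _ /=; rewrite IH.
Qed.

Lemma act_notin m s w L : L \notin sl m s w -> act m s w L = [::].
Proof.
elim: w s => //= c w IH s; rewrite in_cons negb_or => /andP[h1 h2].
by rewrite eq_sym (negbTE h1) IH.
Qed.

Lemma act_in m s w L : act m s w L != [::] -> L \in sl m s w.
Proof.
apply: contraR => h; apply/eqP; exact: act_notin.
Qed.

Lemma sl_nonneg k m x y w :
  all (fun p : nat * nat => (p.1 <= k + m * p.2)%N) (points x y w) ->
  all (fun l : int => (0 <= l)%R) (sl m (Posz (k + m * y) - Posz x)%R w).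
Proof.
elim: w x y => [|c w IH] x y /=; first by [].
case: c => /= /andP[h1 h2]; (apply/andP; split; [lia|]).
  rewrite (_ : (Posz (k + m * y) - Posz x + Posz m)%R = (Posz (k + m * y.+1) - Posz x)%R);
    last by lia.
  exact: IH.
rewrite (_ : (Posz (k + m * y) - Posz x + -1)%R = (Posz (k + m * y) - Posz x.+1)%R);
  last by lia.
exact: IH.
Qed.

Lemma nl_sub m s w v : v \in nl m s w -> v \in sl m s w.
Proof.
elim: w s => //= c w IH s; case: c => /=.
  by rewrite !in_cons => /orP[->//|/IH ->]; rewrite orbT.
by rewrite in_cons => /IH ->; rewrite orbT.
Qed.

Lemma sl_bound m s w l : l \in sl m s w -> (l <= s + Posz (m * size w))%R.
Proof.
elim: w s => //= c w IH s; rewrite in_cons => /orP[/eqP->|/IH h]; first by lia.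
case: c h => /= h; lia.
Qed.

Lemma nl_xs k m x y w :
  nl m (Posz (k + m * y) - Posz x)%R w =
  mkseq (fun i => Posz (k + m * (y + i)) - Posz (nth 0 (north_xs x w) i))%R (count isN w).
Proof.
elim: w x y => [|c w IH] x y /=; first by [].
case: c => /=.
  rewrite add1n /mkseq /=; congr (_ :: _); first by rewrite addn0.
  rewrite (_ : (Posz (k + m * y) - Posz x + Posz m)%R = (Posz (k + m * y.+1) - Posz x)%R); last by lia.
  have -> : iota 1 (count isN w) = map (addn 1) (iota 0 (count isN w)) by rewrite -iotaDl.
  rewrite IH /mkseq -map_comp; apply: eq_map => i /=.
  congr (Posz _ - _)%R; lia.
rewrite (_ : (Posz (k + m * y) - Posz x - 1)%R = (Posz (k + m * y) - Posz x.+1)%R); last by lia.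
by rewrite IH.
Qed.

Lemma act_ne2 m s w L : (L <= s)%R -> (fin m s w < L)%R -> act m s w L != [::].
Proof.
elim: w s => [|c w IH] s /=; first by lia.
move=> h1 h2; case: (s =P L) => [->//|hne] /=.
apply: IH => //; case: c {h2} => /=; lia.
Qed.

Lemma act_ne m s w L v : v \in nl m s w -> (L <= v + Posz m)%R ->
  (fin m s w < L)%R -> act m s w L != [::].
Proof.
elim: w s => [|c w IH] s //=.
have H : act m (s + delta m c) w L != [::] -> ((if s == L then [:: c] else [::]) ++
   act m (s + delta m c) w L != [::]) by case: (s =P L).
case: c H => /= H.
  rewrite in_cons => /orP[/eqP-> hv hf|hv h1 h2].
    apply: H; apply: act_ne2 => //.
  by apply: H; apply: IH.
by move=> hv h1 h2; apply: H; apply: IH.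
Qed.

Lemma count_int x T U :
  count (fun a => (x <= a) && (a.+1 <= T)) (iota 0 U) = minn T U - x.
Proof.
elim: U => [|U IH]; first by rewrite /=; lia.
rewrite -addn1 iotaD count_cat IH /= add0n addn0.
case: (leqP x U) => h1 /=; case: (ltnP U T) => h2 /=; lia.
Qed.

Lemma count_split w : size w = (count isN w + count isE w)%N.
Proof. by elim: w => //= c w ->; case: c => /=; lia. Qed.

Lemma area_eq n k m w : inT n k m w ->
  area_vector n k m w = map absz (nl m (Posz k) w) /\
  all (fun l : int => (0 <= l)%R) (sl m (Posz k) w).
Proof.
move=> [hN [hE hP]].
have hs := @sl_nonneg k m 0 0 w hP; rewrite muln0 addn0 subr0 in hs.
split=> //.
have hx := nl_xs k m 0 0 w; rewrite muln0 addn0 subr0 hN in hx.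
rewrite hx /area_vector /mkseq -map_comp; apply/eq_in_map => i.
rewrite mem_iota add0n => /andP[_ hi].
set xi := nth 0 (north_xs 0 w) i.
have h0 : (0 <= Posz (k + m * i) - Posz xi)%R.
  have : (Posz (k + m * i) - Posz xi)%R \in nl m (Posz k) w.
    by rewrite hx; apply/mapP; exists i => //; rewrite mem_iota.
  move/nl_sub => hin; by move/allP: hs => /(_ _ hin).
rewrite count_int.
have -> : minn (k + m * i) (k + m * n).+1 = k + m * i.
  apply/minn_idPl; apply: leqW; rewrite leq_add2l leq_mul2l; apply/orP; right; exact: ltnW.
rewrite /= add0n -/xi; lia.
Qed.

Lemma sigma_cons m a g i : sigma m (a :: g) i =
  (if (a <= i <= a + m)%N then [:: if a == i then N else E] else [::]) ++ sigma m g i.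
Proof. by rewrite /sigma /zseq /=; case: ifP. Qed.

Lemma sigma_eq m gl i : all (fun l : int => (0 <= l)%R) gl ->
  sigma m (map absz gl) i = sigI m (Posz i) gl.
Proof.
elim: gl => [|v gl IH] //= /andP[hv hg].
rewrite sigma_cons sigI_cons IH //.
case: v hv => // a _ /=.
Qed.

Lemma foldr_max (g : seq nat) v : v \in g -> (v <= foldr maxn 0 g)%N.
Proof.
elim: g => //= a g IH; rewrite in_cons => /orP[/eqP->|/IH h]; first exact: leq_maxl.
by rewrite leq_max h orbT.
Qed.

Lemma M1 m g i : (0 < i)%N -> (i <= Mmax m g)%N -> exists2 v, v \in g & (i <= v + m)%N.
Proof.
move=> hi hM.
case hex: [exists j : 'I_(foldr maxn 0 g + m).+1, (0 < size (zseq m g j)) && (i.-1 < j)%N].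
  move/existsP: hex => [j /andP[hj hij]].
  rewrite /zseq size_filter -has_count in hj; case/hasP: hj => v hv /andP[_ h2].
  by exists v => //; lia.
exfalso.
have : (Mmax m g <= i.-1)%N.
  apply/bigmax_leqP => j hj.
  move/negbT/existsPn: hex => /(_ j); rewrite hj /= -leqNgt; done.
lia.
Qed.

Lemma M2 m g i : (Mmax m g < i)%N -> zseq m g i = [::].
Proof.
move=> hi; apply/eqP; rewrite -size_eq0; apply/negP => hne.
have hP : (0 < size (zseq m g i))%N by rewrite lt0n; apply/negP.
case: (ltnP i (foldr maxn 0 g + m).+1) => hb.
  have := @leq_bigmax_cond _ (fun j : 'I_(foldr maxn 0 g + m).+1 => 0 < size (zseq m g j))%N
    (fun j => nat_of_ord j) (Ordinal hb) hP.
  rewrite /Mmax in hi; move=> h; have := leq_ltn_trans h hi; by rewrite ltnn.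
move: hP; rewrite /zseq size_filter -has_count => /hasP[v hv /andP[_ h2]].
have := @foldr_max g v hv; lia.
Qed.

Lemma rev_map_iota (T : Type) (f : nat -> T) B :
  rev [seq f (B - j) | j <- iota 0 B.+1] = [seq f j | j <- iota 0 B.+1].
Proof.
elim: B => [|B IH] //.
rewrite {1}(_ : iota 0 B.+2 = 0 :: map (addn 1) (iota 0 B.+1)); last by rewrite -iotaDl.
rewrite map_cons -map_comp rev_cons.
rewrite (eq_map (g := fun j => f (B - j))); last by move=> j /=; rewrite subSS.
rewrite IH -[B.+2]addn1 iotaD map_cat cats1 subn0 add0n; congr rcons.
Qed.

Lemma flatten_nil (A B : Type) (f : A -> seq B) (s : seq A) :
  (forall x, List.In x s -> f x = [::]) -> flatten (map f s) = [::].
Proof.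
elim: s => //= x s IH h; rewrite h /=; last by left.
by apply: IH => y hy; apply: h; right.
Qed.

Lemma flatten_nil2 (A : eqType) (B : Type) (f : A -> seq B) (s : seq A) :
  (forall x, x \in s -> f x = [::]) -> flatten (map f s) = [::].
Proof.
elim: s => //= x s IH h; rewrite h ?mem_head //=.
by apply: IH => y hy; apply: h; rewrite in_cons hy orbT.
Qed.

Lemma flip_rev_flip x : flip (rev (flip x)) = rev x.
Proof. by rewrite /flip map_rev -map_comp map_id_in //; case. Qed.

Theorem mainTheorem2 (n k m : nat) (w : seq step) :
  (0 < n)%N -> (0 < m)%N -> inT n k m w ->
  phi' n k m w = flip (rev (sweep_minus 1 (- Posz m)%R (rev (flip w)))).
Proof.
move=> hn hm hT.
have [hg hnn] := @area_eq n k m w hT.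
have [hN [hE hP]] := hT.
have hfin : fin m (Posz k) w = 0%R by rewrite fin_eq hN hE; lia.
pose a := fun i : nat => act m (Posz k) w (Posz i).
set B := sweep_bound 1 (- Posz m) (rev (flip w)).
have hB : B = (size w * (1 + m))%N by rewrite /B /sweep_bound size_rev size_map abszN.
have hlev : forall lv, sweep_level 1 (- Posz m) (rev (flip w)) lv = flip (act m k w lv).
  move=> lv; rewrite /sweep_level; have := levels_rev m (Posz k) w; rewrite hfin => ->.
  rewrite -rev_zip; last by rewrite size_map size_sl.
  by rewrite filter_rev map_rev revK filter_flip.
have RHS : flip (rev (sweep_minus 1 (- Posz m) (rev (flip w)))) =
    flatten [seq rev (a i) | i <- iota 0 B.+1].
  rewrite /sweep_minus -/B /sweep_order (eq_map hlev) map_cat flatten_cat.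
  rewrite flatten_nil ?cat0s; last first.
    move=> x hx; case: (proj1 (List.in_map_iff _ _ _) hx) => j [<- _].
    rewrite act_notin //; apply/negP => hin.
    by have := allP hnn _ hin; lia.
  rewrite -map_comp rev_flatten /flip map_flatten map_rev -!map_comp.
  congr flatten.
  rewrite (eq_map (g := fun j => rev (a (B - j)))); last by move=> j /=; exact: flip_rev_flip.
  exact: (rev_map_iota _ (fun i => rev (a i)) B).
rewrite RHS /phi' hg.
set g := [seq `|i| | i <- nl m k w].
set M := Mmax m g.
have hnl : all (fun l : int => (0 <= l)%R) (nl m (Posz k) w).
  by apply/allP => v /nl_sub hv; exact: (allP hnn _ hv).
have hsig : forall i, sigma m g i = sigI m (Posz i) (nl m k w).
  by move=> i; rewrite /g sigma_eq.
have K : forall i, (if (Posz i <= Posz k)%R then [::] else [:: E]) ++ a i ++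
    (if (Posz i <= 0)%R then [:: E] else [::]) = sigma m g i ++ [:: E].
  by move=> i; rewrite hsig -hfin; exact: key.
have T0 : tau k m g 0 = rev (a 0).
  rewrite /tau leq0n; have := K 0; rewrite lexx lez_nat leq0n cat0s !cats1.
  by move/(@rcons_injl _ E) ->.
have T1 : forall i, (0 < i <= k)%N -> E :: tau k m g i = rev (a i).
  move=> i /andP[h1 h2]; rewrite /tau h2; have := K i.
  rewrite lez_nat h2 (_ : (Posz i <= 0)%R = false); last by lia.
  by rewrite cats0 cat0s => ->; rewrite rev_cat.
have hne : forall i, (k < i <= M)%N -> a i != [::].
  move=> i /andP[h1 h2].
  have hi0 : (0 < i)%N by lia.
  have [v hv hvi] := @M1 m g i hi0 h2.
  case/mapP: hv => u hu hvu.
  apply: (@act_ne m (Posz k) w (Posz i) u hu); last by rewrite hfin; lia.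
  have := allP hnl _ hu; lia.
have T2 : forall i, (k < i <= M)%N -> tau k m g i = rev (a i).
  move=> i hi; have := hne i hi; case/andP: hi => h1 h2.
  rewrite /tau leqNgt h1 /= h2; have := K i.
  rewrite (_ : (Posz i <= Posz k)%R = false); last by lia.
  rewrite (_ : (Posz i <= 0)%R = false); last by lia.
  rewrite cats0 /=; case: (sigma m g i) => [|x sg] /=.
    by case=> ->.
  by case=> _ -> _; rewrite rev_cat.
have T3 : forall i, (maxn k M < i)%N -> a i = [::].
  move=> i hi; have := K i.
  rewrite /sigma M2; last by lia.
  rewrite (_ : (Posz i <= Posz k)%R = false); last by lia.
  rewrite (_ : (Posz i <= 0)%R = false); last by lia.
  by rewrite cats0 /=; case.
have hsz := count_split w.
have TB : (maxn k M <= B)%N.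
  case: (leqP M k) => hMk.
    rewrite hB; lia.
  have := hne M; rewrite hMk leqnn => /(_ isT) /act_in /sl_bound; rewrite hB; lia.
have -> : B.+1 = (1 + k + (M - k) + (B - maxn k M))%N by lia.
rewrite !iotaD !map_cat !flatten_cat !add0n add1n /= cats0 -!catA T0; congr (_ ++ _).
congr (_ ++ _).
  congr flatten; apply/eq_in_map => i; rewrite mem_iota => hi; apply: T1; lia.
have -> : flatten [seq rev (a i) | i <- iota (k.+1 + (M - k)) (B - maxn k M)] = [::].
  apply: flatten_nil2 => i; rewrite mem_iota => hi; rewrite T3 //; lia.
rewrite cats0; congr flatten; apply/eq_in_map => i; rewrite mem_iota => hi; apply: T2; lia.
Qed.
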